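(* Suppose the system is exponentially incrementally input/output-to-state stable as in the context, with constant $\eta\in[0,1)$. Let $Q,R\succ0$, let the stage cost be $l(x,w;(u,y))=|w|_Q^2+|y-h(x,u)|_R^2$, and let $t_1\le t_2$ be nonnegative integers. Then there exist $C_1,C_2,C_3>0$ such that $$|x_\tau-\hat x_\tau|^2\le C_1\eta^{\tau-t_1}|x_{t_1}-\hat x_{t_1}|^2+C_2\max_{j\in\{t_1,\dots,\tau-1\}}\{|w_j|^2,|v_j|^2\}+C_3J_{[t_1,t_2]}(\hat z_{t_1:t_2})$$ for all $\tau\in\{t_1,\dots,t_2\}$, all initial conditions $x_0,\hat x_0\in\mathcal{X}$, and all sequences $u\in\mathcal{U}^\infty$, $w,\hat w\in\mathcal{W}^\infty$, $v\in\mathcal{V}^\infty$, where $x_{j+1}=f(x_j,u_j,w_j)$, $y_j=h(x_j,u_j)+v_j$, $\hat x_{j+1}=f(\hat x_j,u_j,\hat w_j)$, $\hat z_j=(\hat x_j,\hat w_j)$ for all $j\ge0$ (the maximum over an empty index set, i.e. for $\tau=t_1$, is $0$).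
   Context: System: $x_{t+1}=f(x_t,u_t,w_t)$, $y_t=h(x_t,u_t)+v_t$ with $f,h$ continuous and known sets $\mathcal{X}\subseteq\mathbb{R}^n$, $\mathcal{U}$, $\mathcal{W}\ni0$, $\mathcal{V}$ with $f(\mathcal{X}\times\mathcal{U}\times\mathcal{W})\subseteq\mathcal{X}$; $d_j=(u_j,y_j)$. Performance criterion: $J_{[t_1,t_2]}(\hat z_{t_1:t_2})=\sum_{j=t_1}^{t_2-1}l(\hat z_j;d_j)$. $|x|_Q^2=x^\top Qx$. Exponential i-IOSS (assumed): there exist a continuous $U:\mathcal{X}\times\mathcal{X}\to\mathbb{R}_{\ge0}$, matrices $P_1,P_2,S_w,S_y\succ0$ and $\eta\in[0,1)$ such that $|x_1-x_2|_{P_1}^2\le U(x_1,x_2)\le|x_1-x_2|_{P_2}^2$ and $U(f(x_1,u,w_1),f(x_2,u,w_2))\le\eta U(x_1,x_2)+|w_1-w_2|_{S_w}^2+|h(x_1,u)-h(x_2,u)|_{S_y}^2$ for all $(x_1,u,w_1),(x_2,u,w_2)\in\mathcal{X}\times\mathcal{U}\times\mathcal{W}$. *)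

(* Defs.v *)
From HB Require Import structures.
From mathcomp Require Import all_boot all_order all_algebra.
From mathcomp Require Import all_classical all_reals all_analysis.
Set Implicit Arguments. Unset Strict Implicit. Unset Printing Implicit Defensive.
Import Order.TTheory GRing.Theory Num.Theory.
Import numFieldNormedType.Exports.
Local Open Scope classical_set_scope.
Local Open Scope ring_scope.

Definition qf (R : realType) (n : nat) (Q : 'M[R]_n) (x : 'cV[R]_n) : R :=
  (x^T *m Q *m x) 0 0.

Definition sqnorm (R : realType) (n : nat) (x : 'cV[R]_n) : R :=
  \sum_(i < n) (x i 0) ^+ 2.

Definition posdef (R : realType) (n : nat) (Q : 'M[R]_n) : Prop :=
  Q^T = Q /\ forall x : 'cV[R]_n, x != 0 -> 0 < qf Q x.

Definition exp_iIOSS (R : realType) (n m q p : nat)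
  (X : set 'cV[R]_n) (Uset : set 'cV[R]_m) (W : set 'cV[R]_q)
  (f : 'cV[R]_n -> 'cV[R]_m -> 'cV[R]_q -> 'cV[R]_n)
  (h : 'cV[R]_n -> 'cV[R]_m -> 'cV[R]_p) (eta : R) : Prop :=
  exists (U : 'cV[R]_n -> 'cV[R]_n -> R)
         (P1 P2 : 'M[R]_n) (Sw : 'M[R]_q) (Sy : 'M[R]_p),
    {within [set z | X z.1 /\ X z.2], continuous (fun z => U z.1 z.2)} /\
    (forall x1 x2, X x1 -> X x2 -> 0 <= U x1 x2) /\
    posdef P1 /\ posdef P2 /\ posdef Sw /\ posdef Sy /\
    0 <= eta < 1 /\
    (forall x1 x2, X x1 -> X x2 ->
       qf P1 (x1 - x2) <= U x1 x2 /\ U x1 x2 <= qf P2 (x1 - x2)) /\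
    (forall x1 x2 u w1 w2, X x1 -> X x2 -> Uset u -> W w1 -> W w2 ->
       U (f x1 u w1) (f x2 u w2) <=
         eta * U x1 x2 + qf Sw (w1 - w2) + qf Sy (h x1 u - h x2 u)).

Definition stage_cost (R : realType) (n m q p : nat)
  (h : 'cV[R]_n -> 'cV[R]_m -> 'cV[R]_p) (Q : 'M[R]_q) (Rm : 'M[R]_p)
  (x : 'cV[R]_n) (w : 'cV[R]_q) (u : 'cV[R]_m) (y : 'cV[R]_p) : R :=
  qf Q w + qf Rm (y - h x u).

Definition perf_J (R : realType) (n m q p : nat)
  (h : 'cV[R]_n -> 'cV[R]_m -> 'cV[R]_p) (Q : 'M[R]_q) (Rm : 'M[R]_p)
  (t1 t2 : nat) (xhat : nat -> 'cV[R]_n) (what : nat -> 'cV[R]_q)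
  (u : nat -> 'cV[R]_m) (y : nat -> 'cV[R]_p) : R :=
  \sum_(t1 <= j < t2) stage_cost h Q Rm (xhat j) (what j) (u j) (y j).

(* Main.v *)
Require Import Defs.
From HB Require Import structures.
From mathcomp Require Import all_boot all_order all_algebra.
From mathcomp Require Import all_classical all_reals all_analysis.
From mathcomp Require Import ring lra.
Set Implicit Arguments. Unset Strict Implicit. Unset Printing Implicit Defensive.
Import Order.TTheory GRing.Theory Num.Theory.
Import numFieldNormedType.Exports.
Local Open Scope classical_set_scope.
Local Open Scope ring_scope.



Lemma sphere_compact (R : realType) n :
  compact [set v : 'rV[R]_n | `|v| = 1].
Proof.
apply: bounded_closed_compact.
  exists 1; split; first exact: num_real.
  move=> M M1 v /= vE; exact: (eq_ind_r (fun t => t <= M) (ltW M1) vE).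
apply: (@preimage_closed _ _ (fun v : 'rV[R]_n => `|v|) [set x : R | x = 1]).
  by move=> x _; apply: norm_continuous.
exact: closed_eq.
Qed.

Lemma g_cont (R : realType) n (P : 'M[R]_n) :
  continuous (fun v : 'rV[R]_n => (v *m P *m v^T) 0 0).
Proof.
have -> : (fun v : 'rV[R]_n => (v *m P *m v^T) 0 0) =
   (fun v => \sum_(j < n) \sum_(k < n) (v 0 k * P k j) * v 0 j).
  apply: funext => v; rewrite mxE; apply: eq_bigr => j _.
  by rewrite !mxE big_distrl.
have addc : continuous (fun x : R * R => x.1 + x.2) by exact: add_continuous.
apply: (@continuous_big _ _ +%R 0 xpredT addc) => j _.
apply: (@continuous_big _ _ +%R 0 xpredT addc) => k _.
move=> v.
apply: (@continuousM R _ (fun v : 'rV[R]_n => v 0 k * P k j) (fun v => v 0 j)).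
  apply: (@continuousM R _ (fun v : 'rV[R]_n => v 0 k) (fun _ => P k j)).
    exact: coord_continuous.
  exact: cst_continuous.
exact: coord_continuous.
Qed.

Section B.
Variables (R : realType) (n : nat).
Definition gq (P : 'M[R]_n) (v : 'rV[R]_n) : R := (v *m P *m v^T) 0 0.

Lemma qfE P (x : 'cV[R]_n) : qf P x = gq P x^T.
Proof. by rewrite /qf /gq trmxK. Qed.

Lemma gqZ P k v : gq P (k *: v) = k ^+ 2 * gq P v.
Proof.
by rewrite /gq linearZ /= -scalemxAl -scalemxAl -scalemxAr !mxE mulrA expr2.
Qed.

Lemma entry_le_norm (v : 'rV[R]_n) i : `|v 0 i| <= `|v|.
Proof.
have -> : `|v| = mx_norm v by [].
rewrite mx_normrE.
exact: (le_bigmax _ (fun ij : 'I_1 * 'I_n => `|v ij.1 ij.2|) (0, i)).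
Qed.

Lemma norm_attained (v : 'rV[R]_n) : v != 0 -> exists i, `|v| = `|v 0 i|.
Proof.
move=> v0.
have : mx_norm v != 0 by have := v0; rewrite -normr_eq0.
case/mx_norm_neq0 => -[i j] /= h; exists j.
by rewrite (_ : `|v| = mx_norm v) // h (ord1 i).
Qed.

Lemma sq_le_sqnorm (x : 'cV[R]_n) : x != 0 -> `|x^T| ^+ 2 <= sqnorm x.
Proof.
move=> x0.
have xT0 : x^T != 0 by apply: contra x0 => /eqP; rewrite -trmx0 => /trmx_inj ->.
have [i ->] := norm_attained xT0.
rewrite /sqnorm (bigD1 i) //= mxE (real_normK (num_real _)) lerDl.
by apply: sumr_ge0 => j _; exact: sqr_ge0.
Qed.

Lemma sqnorm_le (x : 'cV[R]_n) : sqnorm x <= n%:R * `|x^T| ^+ 2.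
Proof.
rewrite /sqnorm.
apply: le_trans (_ : \sum_(i < n) `|x^T| ^+ 2 <= _).
  apply: ler_sum => i _.
  have := entry_le_norm x^T i; rewrite mxE => h.
  by rewrite -(real_normK (num_real _)) lerXn2r ?nnegrE.
by rewrite sumr_const card_ord mulr_natl.
Qed.

Lemma sqnorm_ge0 (x : 'cV[R]_n) : 0 <= sqnorm x.
Proof. by apply: sumr_ge0 => i _; exact: sqr_ge0. Qed.


Lemma gq0 P : gq P 0 = 0.
Proof. by rewrite /gq !mul0mx mxE. Qed.

Lemma qf0 P : qf P (0 : 'cV[R]_n) = 0.
Proof. by rewrite qfE (@trmx0 R n 1) gq0. Qed.

Lemma sqnorm0 : sqnorm (0 : 'cV[R]_n) = 0.
Proof. by rewrite /sqnorm big1 // => i _; rewrite mxE expr0n. Qed.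

Lemma normalize P (x : 'cV[R]_n) : x != 0 ->
  let N := Num.norm (x^T) in
  0 < N /\ Num.norm (N^-1 *: x^T) = 1 /\
  qf P x = N ^+ 2 * gq P (N^-1 *: x^T).
Proof.
move=> x0 N.
have xT0 : x^T != 0 by apply: contra x0 => /eqP; rewrite -trmx0 => /trmx_inj ->.
have Np : 0 < `|x^T| by rewrite normr_gt0.
split => //; split.
  by rewrite normrZ ger0_norm ?invr_ge0 ?ltW // mulVf // gt_eqF.
by rewrite -gqZ scalerA divff ?gt_eqF // scale1r qfE.
Qed.

Lemma qf_ub P : exists2 C, 0 < C & forall x : 'cV[R]_n, qf P x <= C * sqnorm x.
Proof.
case: (pselect (exists v : 'rV[R]_n, `|v| = 1)) => [[v0 v0E]|none]; last first.
  exists 1 => // x; have [->|x0] := eqVneq x 0.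
    by rewrite qf0 sqnorm0 mulr0.
  by case: (normalize P x0) => _ [h _]; case: none; eexists; exact: h.
have A0 : [set v : 'rV[R]_n | `|v| = 1] !=set0 by exists v0.
have [c cA cmax] := compact_EVT_max A0 (@sphere_compact R n)
   (continuous_subspaceT (@g_cont R n P)).
exists (Num.max (gq P c) 0 + 1).
  by apply: ltr_wpDl; [rewrite le_max lexx orbT | exact: ltr01].
move=> x; have [->|x0] := eqVneq x 0.
  by rewrite qf0 sqnorm0 mulr0.
case: (normalize P x0) => Np [vE ->].
have h1 : gq P (`|x^T|^-1 *: x^T) <= Num.max (gq P c) 0 + 1.
  apply: le_trans (cmax _ _) _; first by rewrite inE.
  apply: (@le_trans _ _ (Num.max (gq P c) 0)); first by rewrite le_max lexx.
  by rewrite lerDl.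
apply: le_trans (_ : `|x^T| ^+ 2 * (Num.max (gq P c) 0 + 1) <= _).
  by rewrite ler_wpM2l // exprn_ge0 // ltW.
rewrite mulrC ler_wpM2l //; last exact: sq_le_sqnorm.
by apply: addr_ge0 => //; rewrite le_max lexx orbT.
Qed.


Lemma qf_lb P : posdef P ->
  exists2 c, 0 < c & forall x : 'cV[R]_n, c * sqnorm x <= qf P x.
Proof.
move=> [_ Ppos].
case: (pselect (exists v : 'rV[R]_n, `|v| = 1)) => [[v0 v0E]|none]; last first.
  exists 1 => // x; have [->|x0] := eqVneq x 0.
    by rewrite qf0 sqnorm0 mulr0.
  by case: (normalize P x0) => _ [h _]; case: none; eexists; exact: h.
have A0 : [set v : 'rV[R]_n | `|v| = 1] !=set0 by exists v0.
have [c cA cmin] := compact_EVT_min A0 (@sphere_compact R n)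
   (continuous_subspaceT (@g_cont R n P)).
have c0 : 0 < gq P c.
  have cT0 : c^T != 0.
    apply/eqP => /(congr1 trmx); rewrite trmxK trmx0 => c0.
    move: cA; rewrite inE /= c0 normr0 => /eqP; by rewrite eq_sym oner_eq0.
  by have := Ppos _ cT0; rewrite qfE trmxK.
have n1 : 0 < n%:R + 1 :> R by rewrite ltr_wpDl.
exists (gq P c / (n%:R + 1)); first by rewrite divr_gt0.
move=> x; have [->|x0] := eqVneq x 0.
  by rewrite qf0 sqnorm0 mulr0.
case: (normalize P x0) => Np [vE ->].
apply: (@le_trans _ _ (gq P c / (n%:R + 1) * ((n%:R + 1) * `|x^T| ^+ 2))).
  apply: ler_wpM2l; first by rewrite divr_ge0 // ltW.
  apply: le_trans (sqnorm_le x) _.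
  by apply: ler_wpM2r; [rewrite exprn_ge0 // ltW | rewrite lerDl].
rewrite mulrA divfK ?gt_eqF // mulrC.
apply: ler_wpM2l; first by rewrite exprn_ge0 // ltW.
by apply: cmin; rewrite inE.
Qed.

End B.

Section C.
Variables (R : realType) (n : nat).

Lemma sqnormB (a b : 'cV[R]_n) : sqnorm (a - b) <= 2 * sqnorm a + 2 * sqnorm b.
Proof.
rewrite /sqnorm !mulr_sumr -big_split /=; apply: ler_sum => i _.
rewrite !mxE -subr_ge0.
have -> : 2 * a i 0 ^+ 2 + 2 * b i 0 ^+ 2 - (a i 0 - b i 0) ^+ 2
  = (a i 0 + b i 0) ^+ 2 by ring.
exact: sqr_ge0.
Qed.

Lemma qf_ge0 (P : 'M[R]_n) : posdef P -> forall x, 0 <= qf P x.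
Proof.
move=> /qf_lb [c c0 h] x; apply: le_trans (h x).
by apply: mulr_ge0; [exact: ltW | exact: sqnorm_ge0].
Qed.

End C.

Lemma div_bound (R : realType) (c K s q : R) : 0 < c -> 0 <= K -> c * s <= q ->
  K * s <= K / c * q.
Proof.
move=> c0 K0 h.
have -> : K * s = K / c * (c * s) by rewrite mulrA divfK // gt_eqF.
by rewrite ler_wpM2l // divr_ge0 // ltW.
Qed.

Lemma stepcomb (R : realType) (eta E D a b c s : R) : 0 <= eta -> eta <= 1 ->
  0 <= b -> 0 <= c -> D <= a + b + c -> E <= eta*D + s -> E <= eta*a + b + c + s.
Proof.
move=> h1 h2 h3 h4 h5 h6.
have h7: eta * D <= eta * (a+b+c) by rewrite ler_wpM2l.
have h8 : eta * b <= b by rewrite ler_piMl.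
have h9 : eta * c <= c by rewrite ler_piMl.
lra.
Qed.

Theorem proposition3 (R : realType) (n m q p : nat)
  (X : set 'cV[R]_n) (Uset : set 'cV[R]_m) (W : set 'cV[R]_q) (V : set 'cV[R]_p)
  (f : 'cV[R]_n -> 'cV[R]_m -> 'cV[R]_q -> 'cV[R]_n)
  (h : 'cV[R]_n -> 'cV[R]_m -> 'cV[R]_p) (eta : R)
  (Q : 'M[R]_q) (Rm : 'M[R]_p) (t1 t2 : nat) :
  continuous (fun z : 'cV[R]_n * 'cV[R]_m * 'cV[R]_q => f z.1.1 z.1.2 z.2) ->
  continuous (fun z : 'cV[R]_n * 'cV[R]_m => h z.1 z.2) ->
  W 0 ->
  (forall x u w, X x -> Uset u -> W w -> X (f x u w)) ->
  exp_iIOSS X Uset W f h eta ->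
  posdef Q -> posdef Rm ->
  (t1 <= t2)%N ->
  exists C1 C2 C3 : R, 0 < C1 /\ 0 < C2 /\ 0 < C3 /\
    forall (tau : nat) (x xhat : nat -> 'cV[R]_n) (u : nat -> 'cV[R]_m)
           (w what : nat -> 'cV[R]_q) (v y : nat -> 'cV[R]_p),
      (t1 <= tau)%N -> (tau <= t2)%N ->
      X (x 0%N) -> X (xhat 0%N) ->
      (forall j, Uset (u j)) -> (forall j, W (w j)) -> (forall j, W (what j)) ->
      (forall j, V (v j)) ->
      (forall j, x j.+1 = f (x j) (u j) (w j)) ->
      (forall j, y j = h (x j) (u j) + v j) ->
      (forall j, xhat j.+1 = f (xhat j) (u j) (what j)) ->
      sqnorm (x tau - xhat tau) <=
        C1 * eta ^+ (tau - t1) * sqnorm (x t1 - xhat t1)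
        + C2 * \big[Num.max/0]_(t1 <= j < tau)
                  Num.max (sqnorm (w j)) (sqnorm (v j))
        + C3 * perf_J h Q Rm t1 t2 xhat what u y.
Proof.
move=> _ _ _ fX [U [P1 [P2 [Sw [Sy [_ [_ [pP1 [pP2 [pSw [pSy [eta01 [Ub Ustep]]]]]]]]]]]]] pQ pR t12.
case/andP: eta01 => eta0 eta1.
have [c1 c1p lb1] := qf_lb pP1.
have [Cp Cpp ub2] := qf_ub P2.
have [Cw Cwp ubw] := qf_ub Sw.
have [Cy Cyp uby] := qf_ub Sy.
have [cQ cQp lbQ] := qf_lb pQ.
have [cR cRp lbR] := qf_lb pR.
pose A := 2 * Cw + 2 * Cy.
pose B := 2 * Cw / cQ + 2 * Cy / cR.
have Ap : 0 < A by rewrite /A addr_gt0 // mulr_gt0.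
have Bp : 0 < B by rewrite /B addr_gt0 // divr_gt0 // mulr_gt0.
exists (Cp / c1), (((t2 - t1)%:R + 1) * A / c1), (B / c1).
split; first by rewrite divr_gt0.
split; first by rewrite divr_gt0 // mulr_gt0 // ltr_wpDl.
split; first by rewrite divr_gt0.
move=> tau x xh u w wh v y ht1 ht2 X0 Xh0 Uu Ww Wwh Vv xE yE xhE.
have Xx : forall j, X (x j) by elim=> // j ih; rewrite xE; exact: fX.
have Xxh : forall j, X (xh j) by elim=> // j ih; rewrite xhE; exact: fX.
pose D j := U (x j) (xh j).
pose M := \big[Num.max/0]_(t1 <= j < tau) Num.max (sqnorm (w j)) (sqnorm (v j)).
pose l j := stage_cost h Q Rm (xh j) (wh j) (u j) (y j).
have l0 j : 0 <= l j by rewrite /l /stage_cost addr_ge0 // qf_ge0.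
have M0 : 0 <= M.
  rewrite /M; elim/big_ind: _ => //.
    by move=> a b a0 b0; rewrite le_max a0.
  by move=> j _; rewrite le_max sqnorm_ge0.
have Mwv j : (t1 <= j < tau)%N ->
    sqnorm (w j) <= M /\ sqnorm (v j) <= M.
  move=> hj.
  have : Num.max (sqnorm (w j)) (sqnorm (v j)) <= M.
    rewrite /M; apply: (le_bigmax_seq 0 j xpredT
      (fun j => Num.max (sqnorm (w j)) (sqnorm (v j)))) => //.
    by rewrite mem_index_iota.
  by rewrite ge_max => /andP[].
have step j : (t1 <= j < tau)%N -> D j.+1 <= eta * D j + A * M + B * l j.
  move=> hj; have [Mw Mv] := Mwv j hj.
  rewrite /D xE xhE.
  apply: le_trans (Ustep _ _ _ _ _ (Xx j) (Xxh j) (Uu j) (Ww j) (Wwh j)) _.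
  have -> : h (x j) (u j) - h (xh j) (u j) = (y j - h (xh j) (u j)) - v j.
    by rewrite yE addrAC addrK.
  set r := y j - h (xh j) (u j).
  have e1 := ubw (w j - wh j).
  have e2 := sqnormB (w j) (wh j).
  have e3 := uby (r - v j).
  have e4 := sqnormB r (v j).
  have e5 : 2 * Cw * sqnorm (wh j) <= 2 * Cw / cQ * qf Q (wh j).
    by apply: div_bound => //; rewrite mulr_ge0 // ltW.
  have e6 : 2 * Cy * sqnorm r <= 2 * Cy / cR * qf Rm r.
    by apply: div_bound => //; rewrite mulr_ge0 // ltW.
  have e7 : Cw * sqnorm (w j - wh j) <= Cw * (2 * sqnorm (w j) + 2 * sqnorm (wh j)).
    by rewrite ler_wpM2l // ltW.
  have e8 : Cy * sqnorm (r - v j) <= Cy * (2 * sqnorm r + 2 * sqnorm (v j)).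
    by rewrite ler_wpM2l // ltW.
  have e9 : Cw * sqnorm (w j) <= Cw * M by rewrite ler_wpM2l // ltW.
  have e10 : Cy * sqnorm (v j) <= Cy * M by rewrite ler_wpM2l // ltW.
  have q1 := qf_ge0 pQ (wh j).
  have q2 := qf_ge0 pR r.
  have e11 : 2 * Cw / cQ * qf Q (wh j) + 2 * Cy / cR * qf Rm r <= B * l j.
    rewrite /B /l /stage_cost -/r.
    have f1 : 0 <= 2 * Cw / cQ * qf Rm r by rewrite mulr_ge0 // divr_ge0 ?mulr_ge0 ?ltW.
    have f2 : 0 <= 2 * Cy / cR * qf Q (wh j) by rewrite mulr_ge0 // divr_ge0 ?mulr_ge0 ?ltW.
    lra.
  rewrite /A; lra.
have ind k : (t1 + k <= tau)%N ->
    D (t1 + k)%N <= eta ^+ k * D t1 + k%:R * A * M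
                    + B * \sum_(t1 <= j < t1 + k) l j.
  elim: k => [|k ih] hk.
    by rewrite addn0 expr0 mul1r mul0r mul0r big_geq // mulr0 !addr0.
  have hk' : (t1 + k <= tau)%N by apply: leq_trans hk; rewrite leq_add2l.
  have hj : (t1 <= t1 + k < tau)%N by rewrite leq_addr /= -addnS.
  have st := step _ hj; rewrite -addrA in st.
  rewrite addnS big_nat_recr /=; last exact: leq_addr.
  have b0 : 0 <= k%:R * A * M by rewrite mulr_ge0 // mulr_ge0 // ltW.
  have s0 : 0 <= B * \sum_(t1 <= j < t1 + k) l j.
    by apply: mulr_ge0; [exact: ltW | exact: sumr_ge0].
  have := stepcomb eta0 (ltW eta1) b0 s0 (ih hk') st.
  rewrite exprS mulrA -[k.+1]addn1 natrD.
  lra.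
have tE : (t1 + (tau - t1))%N = tau by rewrite subnKC.
have hDk := ind (tau - t1)%N (eq_leq tE).
rewrite tE in hDk.
set k := (tau - t1)%N in hDk *.
have lbt := lb1 (x tau - xh tau).
have [u1 _] := Ub _ _ (Xx tau) (Xxh tau).
have [_ u2] := Ub _ _ (Xx t1) (Xxh t1).
have u3 := ub2 (x t1 - xh t1).
have hS : \sum_(t1 <= j < tau) l j <= perf_J h Q Rm t1 t2 xh wh u y.
  apply: (@le_trans _ _ (\sum_(t1 <= j < tau) l j + \sum_(tau <= j < t2) l j)).
    by rewrite lerDl; apply: sumr_ge0 => j _.
  by rewrite /perf_J -big_cat_nat.
have hkk : k%:R <= (t2 - t1)%:R :> R.
  by rewrite ler_nat /k leq_sub2r.
set se := sqnorm (x tau - xh tau).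
set s1 := sqnorm (x t1 - xh t1).
set J := perf_J h Q Rm t1 t2 xh wh u y in hS *.
set ek := eta ^+ k in hDk *.
have ek0 : 0 <= ek by rewrite /ek exprn_ge0.
have g1 : ek * D t1 <= ek * (Cp * s1).
  by apply: ler_wpM2l => //; rewrite /D; exact: le_trans u2 u3.
have g2 : k%:R * A * M <= ((t2 - t1)%:R + 1) * A * M.
  apply: ler_wpM2r => //; apply: ler_wpM2r; first exact: ltW.
  by apply: le_trans hkk _; rewrite lerDl.
have g3 : B * \sum_(t1 <= j < tau) l j <= B * J by apply: ler_wpM2l => //; exact: ltW.
have g4 : c1 * se <= D tau by exact: le_trans lbt u1.
rewrite -(ler_pM2l c1p).
have -> : c1 * (Cp / c1 * ek * s1 + ((t2 - t1)%:R + 1) * A / c1 * M + B / c1 * J)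
   = ek * (Cp * s1) + ((t2 - t1)%:R + 1) * A * M + B * J.
  by field; rewrite gt_eqF.
lra.
Qed.
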